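(* Let $B=\bigoplus_{i\in\mathbb{Z}}B_i$ be a $\mathbb{Z}$-graded noetherian normal integral domain of characteristic zero with $e(B)=1$. For each $d\in\Pi^*(B)$ such that $d$ is a unit of $B$: (a) every derivation $\delta:B^{(d)}\to B^{(d)}$ extends uniquely to a derivation $D:B\to B$; (b) every locally nilpotent derivation $\delta:B^{(d)}\to B^{(d)}$ extends uniquely to a locally nilpotent derivation $D:B\to B$.
   Context: $B^{(d)}=\bigoplus_{i\in\mathbb{Z}}B_{di}$. Derivations are not assumed homogeneous. For a $\mathbb{Z}$-graded domain $C$, $e(C)=\gcd\{i\in\mathbb{Z}:C_i\neq0\}$. $\Pi(B)$ is the set of prime numbers $p$ such that $p\mid e(B/\mathfrak{p})$ for some homogeneous prime ideal $\mathfrak{p}$ of $B$ of height $1$; $\Pi^*(B)$ is the set of positive integers $d$ not divisible by any element of $\Pi(B)$. *)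

(* Defs.v *)
From HB Require Import structures.
From mathcomp Require Import all_boot all_order all_algebra.
From mathcomp Require Import fraction.
Set Implicit Arguments. Unset Strict Implicit. Unset Printing Implicit Defensive.
Import Order.TTheory GRing.Theory Num.Theory.
Local Open Scope ring_scope.

Section Defs.
Variable B : idomainType.

Definition is_ideal (I : B -> Prop) : Prop :=
  [/\ I 0, (forall x y, I x -> I y -> I (x - y)) & (forall a x, I x -> I (a * x))].

Definition is_prime_ideal (I : B -> Prop) : Prop :=
  [/\ is_ideal I, ~ I 1 & (forall x y, I (x * y) -> I x \/ I y)].

Definition noetherian : Prop :=
  forall I : B -> Prop, is_ideal I ->
    exists s : seq B, forall x, I x <->
      exists c : seq B, size c = size s /\
        x = \sum_(i < size s) c`_i * s`_i.

Definition normal_domain : Prop :=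
  forall x : {fraction B},
    (exists p : {poly B}, p \is monic /\ root (map_poly (@tofrac B) p) x) ->
    exists b : B, x = tofrac b.

Definition char_zero : Prop := [pchar B] =i pred0.

(* Bi i is the homogeneous component B_i *)
Definition Z_grading (Bi : int -> B -> Prop) : Prop :=
  [/\ (forall i, Bi i 0) /\ (forall i x y, Bi i x -> Bi i y -> Bi i (x - y)),
      Bi 0 1,
      (forall i j x y, Bi i x -> Bi j y -> Bi (i + j) (x * y)),
      (forall x, exists (s : seq int) (f : int -> B),
          [/\ uniq s, (forall i, Bi i (f i)) & x = \sum_(i <- s) f i]) &
      (forall (s : seq int) (f : int -> B), uniq s -> (forall i, Bi i (f i)) ->
          \sum_(i <- s) f i = 0 -> forall i, i \in s -> f i = 0)].

Definition homogeneous_ideal (Bi : int -> B -> Prop) (I : B -> Prop) : Prop :=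
  is_ideal I /\
  forall x, I x -> exists (s : seq int) (f : int -> B),
     [/\ uniq s, (forall i, Bi i (f i)), (forall i, I (f i)) & x = \sum_(i <- s) f i].

Definition strict_subset (P Q : B -> Prop) : Prop :=
  (forall x, P x -> Q x) /\ exists x, Q x /\ ~ P x.

Definition height_ge (P : B -> Prop) (n : nat) : Prop :=
  exists c : nat -> B -> Prop,
    [/\ (forall k, (k <= n)%N -> is_prime_ideal (c k)),
        (forall k, (k < n)%N -> strict_subset (c k) (c k.+1)) &
        (forall x, c n x <-> P x)].

Definition height_one (P : B -> Prop) : Prop :=
  is_prime_ideal P /\ height_ge P 1 /\ ~ height_ge P 2.

Definition is_gcd_set (S : int -> Prop) (g : nat) : Prop :=
  (forall i, S i -> (g%:Z %| i)%Z) /\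
  (forall c : int, (forall i, S i -> (c %| i)%Z) -> (c %| g%:Z)%Z).

Definition degree_support (Bi : int -> B -> Prop) (i : int) : Prop :=
  exists x, Bi i x /\ x <> 0.

(* degrees i with (B/P)_i <> 0, where (B/P)_i = image of B_i in B/P *)
Definition quot_degree_support (Bi : int -> B -> Prop) (P : B -> Prop) (i : int) : Prop :=
  exists x, Bi i x /\ ~ P x.

Definition e_eq1 (Bi : int -> B -> Prop) : Prop :=
  is_gcd_set (degree_support Bi) 1.

Definition Pi_set (Bi : int -> B -> Prop) (p : nat) : Prop :=
  prime p /\ exists P : B -> Prop,
    [/\ homogeneous_ideal Bi P, height_one P &
        exists g, is_gcd_set (quot_degree_support Bi P) g /\ (p %| g)%N].

Definition Pi_star (Bi : int -> B -> Prop) (d : nat) : Prop :=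
  (0 < d)%N /\ forall p, Pi_set Bi p -> ~ (p %| d)%N.

Definition veronese (Bi : int -> B -> Prop) (d : nat) (x : B) : Prop :=
  exists (s : seq int) (f : int -> B),
    [/\ uniq s, (forall i, Bi (i * d%:Z) (f i)) & x = \sum_(i <- s) f i].

Definition derivation (D : B -> B) : Prop :=
  (forall x y, D (x + y) = D x + D y) /\
  (forall x y, D (x * y) = x * D y + D x * y).

Definition locally_nilpotent (D : B -> B) : Prop :=
  forall x, exists n, iter n D x = 0.

(* a derivation of the subring A (given as a predicate), represented by a
   function B -> B whose values outside A are irrelevant *)
Definition derivation_on (A : B -> Prop) (delta : B -> B) : Prop :=
  [/\ (forall x, A x -> A (delta x)),
      (forall x y, A x -> A y -> delta (x + y) = delta x + delta y) &
      (forall x y, A x -> A y -> delta (x * y) = x * delta y + delta x * y)].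

Definition locally_nilpotent_on (A : B -> Prop) (delta : B -> B) : Prop :=
  forall x, A x -> exists n, iter n delta x = 0.

Definition extends_on (A : B -> Prop) (delta D : B -> B) : Prop :=
  forall x, A x -> D x = delta x.

End Defs.

(* Main.v *)
Require Import Defs.
From HB Require Import structures.
From mathcomp Require Import all_boot all_order all_algebra.
From mathcomp Require Import fraction zify ring.
From Stdlib Require Import ClassicalEpsilon FunctionalExtensionality Classical.
Set Implicit Arguments. Unset Strict Implicit. Unset Printing Implicit Defensive.
Import Order.TTheory GRing.Theory Num.Theory.
Local Open Scope ring_scope.

Section SumLemmas.
Variables (T : eqType) (R : nmodType).

Lemma sum_sub (s t : seq T) (F : T -> R) :
  uniq s -> uniq t -> {subset s <= t} ->
  (forall i, i \notin s -> F i = 0) ->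
  \sum_(i <- t) F i = \sum_(i <- s) F i.
Proof.
move=> us ut sst F0.
rewrite (bigID (fun i => i \in s)) /= [X in _ + X]big1 ?addr0; last first.
  by move=> i /F0.
rewrite -big_filter; apply: perm_big; apply: uniq_perm.
- exact: filter_uniq.
- exact: us.
move=> i; rewrite mem_filter; case: (boolP (i \in s)) => //= /sst ->; by [].
Qed.

Lemma sum_eq_over (s t : seq T) (F : T -> R) :
  uniq s -> uniq t ->
  (forall i, i \notin s -> F i = 0) -> (forall i, i \notin t -> F i = 0) ->
  \sum_(i <- s) F i = \sum_(i <- t) F i.
Proof.
move=> us ut Fs Ft.
have uU : uniq (undup (s ++ t)) by apply: undup_uniq.
rewrite -(@sum_sub s (undup (s ++ t))) //; last first.
  by move=> i; rewrite mem_undup mem_cat => ->.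
rewrite (@sum_sub t (undup (s ++ t))) //.
by move=> i; rewrite mem_undup mem_cat => ->; rewrite orbT.
Qed.

End SumLemmas.

Section Grading.
Variables (B : idomainType) (Bi : int -> B -> Prop).
Hypothesis HG : Z_grading Bi.

Lemma hom0 i : Bi i 0.
Proof. by case: HG => [[H0 _] _ _ _ _]. Qed.

Lemma homB i x y : Bi i x -> Bi i y -> Bi i (x - y).
Proof. by case: HG => [[_ H] _ _ _ _]; apply: H. Qed.

Lemma homN i x : Bi i x -> Bi i (- x).
Proof. by move=> h; rewrite -sub0r; apply: homB => //; apply: hom0. Qed.

Lemma homD i x y : Bi i x -> Bi i y -> Bi i (x + y).
Proof. by move=> hx hy; rewrite -[y]opprK; apply: homB => //; apply: homN. Qed.

Lemma homM i j x y : Bi i x -> Bi j y -> Bi (i + j) (x * y).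
Proof. by case: HG => [_ _ H _ _]; apply: H. Qed.

Lemma hom1 : Bi 0 1.
Proof. by case: HG. Qed.

Lemma homX i x n : Bi i x -> Bi (i * n%:Z) (x ^+ n).
Proof.
move=> hx; elim: n => [|n IH]; first by rewrite mulr0 expr0; apply: hom1.
rewrite exprS; have -> : i * n.+1%:Z = i + i * n%:Z by ring.
exact: homM.
Qed.

Lemma homMn i x n : Bi i x -> Bi i (x *+ n).
Proof.
move=> hx; elim: n => [|n IH]; first by rewrite mulr0n; apply: hom0.
by rewrite mulrS; apply: homD.
Qed.

Lemma hom_nat n : Bi 0 (n%:R).
Proof. exact/homMn/hom1. Qed.

Lemma hom_sum (I : Type) (r : seq I) (F : I -> B) i :
  (forall k, Bi i (F k)) -> Bi i (\sum_(k <- r) F k).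
Proof.
move=> H; elim: r => [|a r IH]; first by rewrite big_nil; apply: hom0.
by rewrite big_cons; apply: homD.
Qed.

Lemma hom_dir (s : seq int) (f : int -> B) : uniq s -> (forall i, Bi i (f i)) ->
  \sum_(i <- s) f i = 0 -> forall i, i \in s -> f i = 0.
Proof. by case: HG => [_ _ _ _ H]; apply: H. Qed.

Definition decP (x : B) (p : seq int * (int -> B)) : Prop :=
  [/\ uniq p.1, (forall i, Bi i (p.2 i)) & x = \sum_(i <- p.1) p.2 i].

Definition dec (x : B) : seq int * (int -> B) :=
  epsilon (inhabits ([::], fun _ => 0)) (decP x).

Lemma dec_spec x : decP x (dec x).
Proof.
rewrite /dec; apply: epsilon_spec.
case: HG => [_ _ _ H _]; case: (H x) => s [f [us hf ex]].
by exists (s, f).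
Qed.

Definition hsupp x := (dec x).1.
Definition hc (i : int) (x : B) := if i \in hsupp x then (dec x).2 i else 0.

Lemma supp_uniq x : uniq (hsupp x).
Proof. by case: (dec_spec x). Qed.

Lemma comp_hom i x : Bi i (hc i x).
Proof.
rewrite /hc; case: ifP => _; last exact: hom0.
by case: (dec_spec x).
Qed.

Lemma comp_out i x : i \notin hsupp x -> hc i x = 0.
Proof. by rewrite /hc => /negbTE ->. Qed.

Lemma comp_sum x : x = \sum_(i <- hsupp x) hc i x.
Proof.
case: (dec_spec x) => _ _ ex; rewrite {1}ex.
by apply: eq_big_seq => i; rewrite /hc => ->.
Qed.

Lemma comp_sum_sup x (t : seq int) : uniq t ->
  (forall i, i \notin t -> hc i x = 0) -> x = \sum_(i <- t) hc i x.
Proof.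
move=> ut Ht; rewrite {1}(comp_sum x); apply: sum_eq_over.
- exact: supp_uniq.
- exact: ut.
- by move=> i /comp_out.
- exact: Ht.
Qed.

Lemma comp_uniq (s : seq int) (f : int -> B) x : uniq s -> (forall i, Bi i (f i)) ->
  x = \sum_(i <- s) f i -> forall i, hc i x = if i \in s then f i else 0.
Proof.
move=> us hf ex.
set U := undup (s ++ hsupp x).
have uU : uniq U by apply: undup_uniq.
pose g i := (if i \in s then f i else 0) - hc i x.
have hg : forall i, Bi i (g i).
  move=> i; apply: homB; last exact: comp_hom.
  by case: ifP => _ //; apply: hom0.
have sg : \sum_(i <- U) g i = 0.
  rewrite big_split /= sumrN.
  have sU : {subset s <= U} by move=> i; rewrite mem_undup mem_cat => ->.
  rewrite (@sum_sub _ _ s U _ us uU sU); last by move=> i /negbTE ->.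
  rewrite -(comp_sum_sup uU); last first.
    by move=> i; rewrite mem_undup mem_cat negb_or => /andP [_]; apply: comp_out.
  rewrite ex (eq_big_seq f) ?subrr //.
  by move=> i ->.
move=> i; case: (boolP (i \in U)) => iU.
  by move/eqP: (hom_dir uU hg sg iU); rewrite subr_eq0 => /eqP <-.
move: iU; rewrite mem_undup mem_cat negb_or => /andP [/negbTE -> /comp_out ->].
by [].
Qed.

Lemma comp_homE j h i : Bi j h -> hc i h = if i == j then h else 0.
Proof.
move=> hh.
have hf : forall k, Bi k (if k == j then h else 0).
  by move=> k; case: ifP => [/eqP -> // | _]; exact: hom0.
have := @comp_uniq [:: j] (fun k => if k == j then h else 0) h erefl hf.
rewrite big_seq1 eqxx => /(_ erefl i); rewrite inE.
by move=> ->; case: (i == j).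
Qed.

Lemma comp0 i : hc i 0 = 0.
Proof. by rewrite (@comp_homE 0) ?if_same //; apply: hom0. Qed.

Lemma comp_add i x y : hc i (x + y) = hc i x + hc i y.
Proof.
set U := undup (hsupp x ++ hsupp y).
have uU : uniq U by apply: undup_uniq.
have := @comp_uniq U (fun k => hc k x + hc k y) (x + y) uU.
have outx k : k \notin U -> hc k x = 0.
  by rewrite mem_undup mem_cat negb_or => /andP [/comp_out -> _].
have outy k : k \notin U -> hc k y = 0.
  by rewrite mem_undup mem_cat negb_or => /andP [_ /comp_out ->].
move=> /(_ _ _ i) -> //.
- by case: ifP => // /negbT iU; rewrite outx ?outy ?addr0.
- by move=> k; apply: homD; apply: comp_hom.
- by rewrite big_split /= -!comp_sum_sup.
Qed.

Lemma comp_opp i x : hc i (- x) = - hc i x.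
Proof.
by apply/eqP; rewrite -subr_eq0 opprK addrC -comp_add subrr comp0.
Qed.

Lemma comp_sub i x y : hc i (x - y) = hc i x - hc i y.
Proof. by rewrite comp_add comp_opp. Qed.

Lemma comp_big i (I : Type) (r : seq I) (F : I -> B) :
  hc i (\sum_(k <- r) F k) = \sum_(k <- r) hc i (F k).
Proof. by apply: big_morph; [apply: comp_add | apply: comp0]. Qed.

Lemma comp_mulh j h y k : Bi j h -> hc k (h * y) = h * hc (k - j) y.
Proof.
move=> hh.
pose g k := h * hc (k - j) y.
have inj : injective (fun i : int => i + j) by move=> a b /= /addIr.
have um : uniq (map (fun i => i + j) (hsupp y)) by rewrite map_inj_uniq // supp_uniq.
have := @comp_uniq _ g (h * y) um.
move=> /(_ _ _ k) -> //.
- case: ifP => //; move/negbT => kn.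
  rewrite /g comp_out ?mulr0 //; apply: contra kn => kin.
  by apply/mapP; exists (k - j) => //; rewrite subrK.
- move=> i; rewrite /g.
  have := homM hh (comp_hom (i - j) y).
  by have -> : j + (i - j) = i by ring.
- rewrite big_map /g {1}(comp_sum y) mulr_sumr; apply: eq_bigr => i _.
  by rewrite addrK.
Qed.

Lemma comp_zero x : (forall i, hc i x = 0) -> x = 0.
Proof. by move=> H; rewrite (comp_sum x) big1. Qed.

Lemma hom_comp_self j h : Bi j h -> hc j h = h.
Proof. by move=> hh; rewrite (comp_homE _ hh) eqxx. Qed.

Lemma sum_comp_big x (t : seq int) : uniq t -> {subset hsupp x <= t} ->
  x = \sum_(i <- t) hc i x.
Proof.
move=> ut st; apply: comp_sum_sup => // i it; apply: comp_out.
by apply: contra it; apply: st.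
Qed.

End Grading.


Lemma sum_pick (T : eqType) (R : nmodType) (s : seq T) (j : T) (c : R) :
  uniq s -> \sum_(i <- s) (if i == j then c else 0) = if j \in s then c else 0.
Proof.
elim: s => [|a s IH]; first by rewrite big_nil.
rewrite big_cons inE /= => /andP [an us]; rewrite IH //.
case: eqP => [<-|]; first by rewrite eqxx (negbTE an) addr0.
by move=> ne; rewrite add0r; case: eqP => // e; case: ne.
Qed.

Section Veronese.
Variables (B : idomainType) (Bi : int -> B -> Prop).
Hypothesis HG : Z_grading Bi.
Variable d : nat.
Hypothesis dpos : (0 < d)%N.

Local Notation hc := (hc Bi).
Local Notation hsupp := (hsupp Bi).
Local Notation A := (veronese Bi d).

Lemma ver_comp x : A x -> forall j, ~~ (d%:Z %| j)%Z -> hc j x = 0.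
Proof.
case=> s [f [us hf ->]] j nd.
rewrite comp_big //; apply: big1 => i _.
rewrite (comp_homE HG _ (hf i)); case: eqP => // ej.
by case/negP: nd; rewrite ej dvdz_mull.
Qed.

Lemma comp_ver x : (forall j, ~~ (d%:Z %| j)%Z -> hc j x = 0) -> A x.
Proof.
move=> H.
set L := [seq j <- hsupp x | (d%:Z %| j)%Z].
exists (map (fun j => (j %/ d%:Z)%Z) L), (fun i => hc (i * d%:Z) x).
split.
- rewrite map_inj_in_uniq; first by rewrite filter_uniq // supp_uniq.
  move=> a b; rewrite !mem_filter => /andP [da _] /andP [db _] e.
  by rewrite -(divzK da) -(divzK db) e.
- by move=> i; apply: comp_hom.
- rewrite big_map.
  rewrite (eq_big_seq (fun j => hc j x)); last first.
    by move=> j; rewrite mem_filter => /andP [dj _]; rewrite divzK.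
  rewrite big_filter big_mkcond /= {1}(comp_sum HG x).
  apply: eq_bigr => j _; case: ifP => // /negbT; exact: H.
Qed.

Lemma ver_iff x : A x <-> forall j, ~~ (d%:Z %| j)%Z -> hc j x = 0.
Proof. by split; [apply: ver_comp | apply: comp_ver]. Qed.

Lemma ver_hom m h : Bi (m * d%:Z) h -> A h.
Proof.
move=> hh; apply: comp_ver => j nd; rewrite (comp_homE HG _ hh).
case: eqP => // ej; by case/negP: nd; rewrite ej dvdz_mull.
Qed.

Lemma ver_hom' j h : Bi j h -> (d%:Z %| j)%Z -> A h.
Proof. by move=> hh dj; apply: (@ver_hom (j %/ d%:Z)%Z); rewrite divzK. Qed.

Lemma ver0 : A 0.
Proof. by apply: comp_ver => j _; rewrite comp0. Qed.

Lemma verD x y : A x -> A y -> A (x + y).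
Proof.
move=> /ver_comp hx /ver_comp hy; apply: comp_ver => j nd.
by rewrite comp_add // hx // hy // addr0.
Qed.

Lemma verN x : A x -> A (- x).
Proof.
by move=> /ver_comp hx; apply: comp_ver => j nd; rewrite comp_opp // hx // oppr0.
Qed.

Lemma verB x y : A x -> A y -> A (x - y).
Proof. by move=> hx hy; apply: verD => //; apply: verN. Qed.

Lemma verM x y : A x -> A y -> A (x * y).
Proof.
move=> /ver_comp hx /ver_comp hy; apply: comp_ver => j nd.
rewrite (comp_sum HG x) mulr_suml comp_big //; apply: big1 => i _.
rewrite (comp_mulh HG _ _ (comp_hom HG i x)).
case: (boolP (d%:Z %| i)%Z) => di.
  rewrite hy ?mulr0 //; apply: contra nd => dji.
  have -> : j = (j - i) + i by ring.
  by rewrite rpredD.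
by rewrite hx // mul0r.
Qed.

Lemma ver_nat n : A n%:R.
Proof. by apply: (@ver_hom 0); rewrite mul0r; apply: hom_nat. Qed.

Lemma ver1 : A 1.
Proof. exact: (ver_nat 1). Qed.

Lemma verX x n : A x -> A (x ^+ n).
Proof.
move=> hx; elim: n => [|n IH]; first by rewrite expr0; apply: ver1.
by rewrite exprS; apply: verM.
Qed.

Lemma ver_sum (I : Type) (r : seq I) (F : I -> B) :
  (forall k, A (F k)) -> A (\sum_(k <- r) F k).
Proof.
move=> H; elim: r => [|a r IH]; first by rewrite big_nil; apply: ver0.
by rewrite big_cons; apply: verD.
Qed.

Lemma ver_cancel a z : A a -> a != 0 -> A (a * z) -> A z.
Proof.
move=> ha a0 haz.
set z1 := \sum_(j <- hsupp z | ~~ (d%:Z %| j)%Z) hc j z.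
have cz1 j : hc j z1 = if ~~ (d%:Z %| j)%Z then hc j z else 0.
  rewrite /z1 big_mkcond comp_big //.
  rewrite (eq_bigr (fun i => if i == j then (if ~~ (d%:Z %| j)%Z then hc j z else 0) else 0)); last first.
    move=> i _; case: (eqVneq i j) => [<-|nij].
      case: ifP => ni; last by rewrite comp0.
      by rewrite (hom_comp_self HG) //; apply: comp_hom.
    case: ifP => ni; last by rewrite comp0.
    by rewrite (comp_homE HG _ (comp_hom HG i z)) eq_sym (negbTE nij).
  rewrite sum_pick ?supp_uniq //; case: ifP => // /negbT jz.
  by case: ifP => //; rewrite comp_out.
have z0 : A (z - z1).
  apply: comp_ver => j nd; rewrite comp_sub // cz1 nd subrr //.
have az1 : A (a * z1).
  have -> : a * z1 = a * z - a * (z - z1) by ring.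
  by apply: verB => //; apply: verM.
have : a * z1 = 0.
  apply: (comp_zero HG) => j.
  case: (boolP (d%:Z %| j)%Z) => dj; last exact: ver_comp az1 j dj.
  rewrite (comp_sum HG a) mulr_suml comp_big //; apply: big1 => i _.
  rewrite (comp_mulh HG _ _ (comp_hom HG i a)).
  case: (boolP (d%:Z %| i)%Z) => di; last by rewrite (ver_comp ha) // mul0r.
  rewrite cz1; case: ifP; last by rewrite mulr0.
  move=> /negP nd; case: nd; by rewrite rpredB.
move/eqP; rewrite mulf_eq0 (negbTE a0) /= => /eqP e1.
by have -> : z = z - z1 by rewrite e1 subr0.
Qed.

Variable delta : B -> B.
Hypothesis Hd : derivation_on A delta.

Lemma dA x : A x -> A (delta x).
Proof. by case: Hd => H _ _; apply: H. Qed.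
Lemma dD x y : A x -> A y -> delta (x + y) = delta x + delta y.
Proof. by case: Hd => _ H _; apply: H. Qed.
Lemma dM x y : A x -> A y -> delta (x * y) = x * delta y + delta x * y.
Proof. by case: Hd => _ _ H; apply: H. Qed.

Lemma d0 : delta 0 = 0.
Proof.
have h := dD ver0 ver0; rewrite addr0 in h.
by apply: (addrI (delta 0)); rewrite -h addr0.
Qed.

Lemma dN x : A x -> delta (- x) = - delta x.
Proof.
move=> hx; apply/eqP; rewrite -subr_eq0 opprK.
by rewrite -dD ?addNr ?d0 //; apply: verN.
Qed.

Lemma dB x y : A x -> A y -> delta (x - y) = delta x - delta y.
Proof. by move=> hx hy; rewrite dD ?dN //; apply: verN. Qed.

Lemma d_sum (I : Type) (r : seq I) (F : I -> B) :
  (forall k, A (F k)) -> delta (\sum_(k <- r) F k) = \sum_(k <- r) delta (F k).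
Proof.
move=> H; elim: r => [|a r IH]; first by rewrite !big_nil d0.
by rewrite !big_cons dD ?IH //; apply: ver_sum.
Qed.

Lemma d1 : delta 1 = 0.
Proof.
have h := dM ver1 ver1; rewrite !mul1r !mulr1 in h.
by apply: (addrI (delta 1)); rewrite -h addr0.
Qed.

Lemma d_nat n : delta n%:R = 0.
Proof.
elim: n => [|n IH]; first by rewrite d0.
by rewrite -addn1 natrD dD ?IH ?d1 ?addr0 //; apply: ver_nat.
Qed.

End Veronese.

Lemma pow_rule (B : comNzRingType) (S : B -> Prop) (f : B -> B) :
  (forall x y, S x -> S y -> S (x * y)) ->
  (forall x y, S x -> S y -> f (x * y) = x * f y + f x * y) ->
  forall h, S h -> forall n, f (h ^+ n.+1) = n.+1%:R * h ^+ n * f h.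
Proof.
move=> SM fM h Sh.
have SX : forall n, S (h ^+ n.+1).
  by elim=> [|n IH]; rewrite ?expr1 // exprS; apply: SM.
elim=> [|n IH]; first by rewrite expr1 expr0 mulr1 mul1r.
rewrite exprS fM // IH.
have -> : (n.+2)%:R = (n.+1)%:R + 1 :> B by rewrite -addn1 natrD.
rewrite !exprS; ring.
Qed.


Section Ideals.
Variable B : idomainType.
Implicit Types I : B -> Prop.

Definition dvds (s y : B) := exists t, y = s * t.

Lemma iI0 I : is_ideal I -> I 0.
Proof. by case. Qed.
Lemma iIB I x y : is_ideal I -> I x -> I y -> I (x - y).
Proof. by case=> _ H _; apply: H. Qed.
Lemma iIM I a x : is_ideal I -> I x -> I (a * x).
Proof. by case=> _ _ H; apply: H. Qed.
Lemma iIMr I a x : is_ideal I -> I x -> I (x * a).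
Proof. by move=> HI Ix; rewrite mulrC; apply: iIM. Qed.
Lemma iIN I x : is_ideal I -> I x -> I (- x).
Proof. by move=> HI Ix; rewrite -sub0r; apply: iIB => //; apply: iI0. Qed.
Lemma iID I x y : is_ideal I -> I x -> I y -> I (x + y).
Proof. by move=> HI Ix Iy; rewrite -[y]opprK; apply: iIB => //; apply: iIN. Qed.
Lemma iI_sum I (T : Type) (r : seq T) (F : T -> B) :
  is_ideal I -> (forall k, I (F k)) -> I (\sum_(k <- r) F k).
Proof.
move=> HI H; elim: r => [|a r IH]; first by rewrite big_nil; apply: iI0.
by rewrite big_cons; apply: iID.
Qed.
Lemma iI_sum_in I (T : eqType) (r : seq T) (F : T -> B) :
  is_ideal I -> (forall k, k \in r -> I (F k)) -> I (\sum_(k <- r) F k).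
Proof.
move=> HI; elim: r => [|a r IH] H; first by rewrite big_nil; apply: iI0.
rewrite big_cons; apply: iID => //; first by apply: H; rewrite inE eqxx.
by apply: IH => k kr; apply: H; rewrite inE kr orbT.
Qed.

Lemma combo_mem I (g : seq B) (cl : seq B) :
  is_ideal I -> (forall k, (k < size g)%N -> I g`_k) ->
  I (\sum_(i < size g) cl`_i * g`_i).
Proof.
move=> HI Hg; apply: iI_sum => // [[i ilt]] /=.
by apply: (iIM _ HI); apply: Hg.
Qed.

Lemma gen_mem I (g : seq B) :
  (forall x, I x <-> exists cl : seq B, size cl = size g /\
        x = \sum_(i < size g) cl`_i * g`_i) ->
  forall k, (k < size g)%N -> I g`_k.
Proof.
move=> Hg k kl; apply/Hg.
exists [seq (i == k)%:R | i <- iota 0 (size g)]; rewrite size_map size_iota; split => //.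
rewrite (bigD1 (Ordinal kl)) //= big1 ?addr0.
  by rewrite (nth_map 0) ?size_iota // nth_iota // add0n eqxx mul1r.
move=> i /eqP ne; rewrite (nth_map 0) ?size_iota // nth_iota // add0n.
case: eqP => [e|]; last by rewrite mul0r.
by case: ne; apply: val_inj.
Qed.

Lemma noeth_max (T : Type) (I : T -> B -> Prop) (Q : T -> Prop) :
  noetherian B -> (forall t, Q t -> is_ideal (I t)) -> (exists t, Q t) ->
  exists t0, Q t0 /\ forall t, Q t -> (forall x, I t0 x -> I t x) ->
    forall x, I t x -> I t0 x.
Proof.
move=> HN HI [t1 Qt1].
apply: NNPP => Hno.
pose R t0 t := Q t /\ (forall x, I t0 x -> I t x) /\ exists x, I t x /\ ~ I t0 x.
have step : forall t0, Q t0 -> exists t, R t0 t.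
  move=> t0 Qt0; apply: NNPP => H; apply: Hno; exists t0; split => // t Qt sub x Itx.
  apply: NNPP => nx; apply: H; exists t; split => //; split => //; by exists x.
pose next t0 := epsilon (inhabits t1) (R t0).
have nextP : forall t0, Q t0 -> R t0 (next t0).
  by move=> t0 Qt0; apply: epsilon_spec; apply: step.
pose c n := iter n next t1.
have Qc : forall n, Q (c n).
  by elim=> [|n IH] //=; case: (nextP _ IH).
have mono : forall n m x, (n <= m)%N -> I (c n) x -> I (c m) x.
  move=> n m x; elim: m => [|m IH].
    by rewrite leqn0 => /eqP ->.
  rewrite leq_eqVlt => /orP [/eqP -> // | lt].
  move=> Ix; have := IH lt Ix; case: (nextP _ (Qc m)) => _ [H _]; exact: H.
pose U x := exists n, I (c n) x.
have UI : is_ideal U.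
  split.
  - by exists 0%N; apply: iI0; apply: HI.
  - move=> x y [n Hx] [m Hy]; exists (maxn n m); apply: iIB; first exact: HI.
    + by apply: (mono n) => //; apply: leq_maxl.
    + by apply: (mono m) => //; apply: leq_maxr.
  - by move=> a x [n Hx]; exists n; apply: iIM => //; apply: HI.
have [g Hg] := HN U UI.
have gU := gen_mem Hg.
have : forall m, (m <= size g)%N -> exists N, forall k, (k < m)%N -> I (c N) g`_k.
  elim=> [|m IH] lm; first by exists 0%N.
  have [N HN'] := IH (ltnW lm).
  have [n Hn] := gU m lm.
  exists (maxn N n) => k; rewrite ltnS leq_eqVlt => /orP [/eqP -> | kl].
    by apply: (mono n) => //; apply: leq_maxr.
  by apply: (mono N); [apply: leq_maxl | apply: HN'].
move=> /(_ (size g) (leqnn _)) [N HN'].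
have UN : forall x, U x -> I (c N) x.
  move=> x /Hg [cl [_ ->]]; apply: combo_mem => //; exact: HI.
case: (nextP _ (Qc N)) => _ [_ [x [Ix nIx]]].
by apply: nIx; apply: UN; exists N.+1.
Qed.

End Ideals.


Section Integral.
Variable B : idomainType.
Implicit Types I : B -> Prop.
Local Notation "x %:F" := (@tofrac B x).

Lemma char_poly_eval (F : fieldType) n (M : 'M[F]_n) u :
  (char_poly M).[u] = \det (u%:M - M).
Proof.
rewrite /char_poly -horner_evalE -det_map_mx; congr (\det _).
apply/matrixP => i j; rewrite !mxE /= horner_evalE.
by rewrite hornerD hornerN hornerMn hornerX hornerC.
Qed.

Lemma integral_ann I s c :
  noetherian B -> normal_domain B -> is_ideal I ->
  (exists q, I q /\ q != 0) -> s != 0 ->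
  (forall q, I q -> exists q', I q' /\ c * q = s * q') -> dvds s c.
Proof.
move=> HN Hnorm HI [q [Iq q0]] s0 Hc.
have [g Hg] := HN I HI.
have gI := gen_mem Hg.
set n := size g.
have ex : forall k : 'I_n, exists cl : seq B,
    c * g`_k = s * \sum_(i < n) cl`_i * g`_i.
  move=> [k kl] /=; have [q' [Iq' e]] := Hc _ (gI k kl).
  have [cl [_ ecl]] := (Hg q').1 Iq'.
  by exists cl; rewrite e ecl.
pose clf (k : 'I_n) := epsilon (inhabits [::])
   (fun cl : seq B => c * g`_k = s * \sum_(i < n) cl`_i * g`_i).
have clfP : forall k : 'I_n, c * g`_k = s * \sum_(i < n) (clf k)`_i * g`_i.
  move=> k; exact: (epsilon_spec (inhabits [::])
     (fun cl : seq B => c * g`_k = s * \sum_(i < n) cl`_i * g`_i) (ex k)).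
pose M : 'M[B]_n := \matrix_(i < n, k < n) (clf k)`_i.
pose u : {fraction B} := c%:F / s%:F.
have s0F : s%:F != 0 by rewrite tofrac_eq0.
pose G : 'rV[{fraction B}]_n := \row_(i < n) (g`_i)%:F.
pose Mf := map_mx (@tofrac B) M.
have HGM : G *m (u%:M - Mf) = 0.
  rewrite mulmxBr mul_mx_scalar; apply/rowP => k; rewrite !mxE.
  apply/eqP; rewrite subr_eq0; apply/eqP.
  apply: (mulfI s0F).
  rewrite /u mulrA mulrCA mulfV // mulr1 -tofracM clfP tofracM; congr (_ * _).
  rewrite rmorph_sum /=; apply: eq_bigr => i _; rewrite !mxE tofracM mulrC.
  by [].
have G0 : G != 0.
  apply/negP => /eqP G0; move: q0; have [cl [_ ->]] := (Hg q).1 Iq.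
  rewrite big1 ?eqxx // => i _.
  have : G 0 i = 0 by rewrite G0 mxE.
  by rewrite mxE => /eqP; rewrite tofrac_eq0 => /eqP ->; rewrite mulr0.
have det0 : \det (u%:M - Mf) = 0.
  by apply/eqP/det0P; exists G.
have [b ub] : exists b, u = b%:F.
  apply: Hnorm; exists (char_poly M); split; first exact: char_poly_monic.
  by rewrite /root map_char_poly char_poly_eval det0.
exists b; apply/eqP; rewrite -tofrac_eq tofracM -ub /u mulrC mulfVK //.
Qed.

End Integral.


Definition pb (P : Prop) : bool := if excluded_middle_informative P then true else false.
Lemma pbP (P : Prop) : reflect P (pb P).
Proof. by rewrite /pb; case: excluded_middle_informative => h; constructor. Qed.

Lemma seq_max (s : seq int) : s != [::] -> exists2 m, m \in s & forall i, i \in s -> i <= m.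
Proof.
elim: s => [//|a s IH] _.
case: (eqVneq s [::]) => [->|ne].
  by exists a; rewrite ?inE ?eqxx // => i; rewrite inE => /eqP ->.
have [m ms Hm] := IH ne.
case: (leP a m) => am.
  exists m; first by rewrite inE ms orbT.
  by move=> i; rewrite inE => /orP [/eqP -> | /Hm].
exists a; first by rewrite inE eqxx.
move=> i; rewrite inE => /orP [/eqP -> // | /Hm im].
by apply: le_trans im (ltW am).
Qed.

Section HomPrime.
Variables (B : idomainType) (Bi : int -> B -> Prop).
Hypothesis HG : Z_grading Bi.
Local Notation hc := (hc Bi).
Local Notation hsupp := (hsupp Bi).

Lemma not_in_split (P : B -> Prop) z : is_ideal P -> ~ P z ->
  exists S : seq int, [/\ uniq S, S != [::], (forall i, i \in S -> ~ P (hc i z)) &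
     P (z - \sum_(i <- S) hc i z)].
Proof.
move=> HI nz.
set S := [seq i <- hsupp z | ~~ pb (P (hc i z))].
have PS : P (z - \sum_(i <- S) hc i z).
  rewrite {1}(comp_sum HG z) (bigID (fun i => pb (P (hc i z)))) /= big_filter addrK.
  rewrite big_mkcond; apply: iI_sum => // i.
  by case: pbP => // _; apply: iI0.
exists S; split => //.
- by rewrite filter_uniq // supp_uniq.
- apply/negP => /eqP S0; apply: nz; move: PS; by rewrite S0 big_nil subr0.
- by move=> i; rewrite mem_filter => /andP [/pbP].
Qed.

Lemma hom_prime (P : B -> Prop) :
  is_ideal P -> (forall x k, P x -> P (hc k x)) ->
  (forall a b i j, Bi i a -> Bi j b -> P (a * b) -> P a \/ P b) ->
  forall x y, P (x * y) -> P x \/ P y.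
Proof.
move=> HI Hh Hp x y Pxy.
apply: NNPP => /not_or_and [nPx nPy].
have [Sx [ux nex Hx Px]] := not_in_split HI nPx.
have [Sy [uy ney Hy Py]] := not_in_split HI nPy.
have [m mS Hm] := seq_max nex.
have [n nS Hn] := seq_max ney.
set x' := \sum_(i <- Sx) hc i x.
set y' := \sum_(i <- Sy) hc i y.
have Pxy' : P (x' * y').
  have -> : x' * y' = x * y - (x - x') * y - x' * (y - y') by ring.
  apply: (iIB HI); first apply: (iIB HI) => //.
  - exact: (iIMr y HI Px).
  - exact: (iIM x' HI Py).
have := Hh _ (m + n) Pxy'.
rewrite /x' /y' mulr_suml comp_big //.
rewrite (eq_big_seq (fun i => if i == m then hc m x * hc n y else 0)); last first.
  move=> i iS; rewrite mulr_sumr comp_big //.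
  rewrite (eq_big_seq (fun j => if i == m then (if j == n then hc m x * hc n y else 0) else 0)); last first.
    move=> j jS.
    rewrite (comp_homE HG _ (homM HG (comp_hom HG i x) (comp_hom HG j y))).
    have -> : (m + n == i + j) = ((i == m) && (j == n)).
      have := Hm _ iS; have := Hn _ jS => jn im.
      apply/eqP/andP; first by move=> e; split; apply/eqP; lia.
      by case=> /eqP -> /eqP ->.
    by case: eqP => [->|]; case: eqP => [->|].
  case: eqP => _; first by rewrite sum_pick // nS.
  by rewrite big1.
rewrite sum_pick // mS => /(Hp _ _ _ _ (comp_hom HG m x) (comp_hom HG n y)).
by case=> [/(Hx _ mS) | /(Hy _ nS)].
Qed.

End HomPrime.


Section Assoc.
Variables (B : idomainType) (Bi : int -> B -> Prop).
Hypothesis HG : Z_grading Bi.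
Hypothesis HN : noetherian B.
Hypothesis Hnorm : normal_domain B.
Local Notation hc := (hc Bi).
Local Notation hsupp := (hsupp Bi).

Definition ann (s c : B) : B -> Prop := fun x => dvds s (x * c).

Lemma ann_ideal s c : is_ideal (ann s c).
Proof.
split.
- by exists 0; rewrite mul0r mulr0.
- move=> x y [t1 e1] [t2 e2]; exists (t1 - t2).
  by rewrite mulrBl e1 e2 mulrBr.
- by move=> a x [t e]; exists (a * t); rewrite -mulrA e mulrCA.
Qed.

Lemma zero_prime : is_prime_ideal (fun x : B => x = 0).
Proof.
split.
- split => //; first by move=> x y -> ->; rewrite subr0.
  by move=> a x ->; rewrite mulr0.
- by move/eqP; rewrite oner_eq0.
- by move=> x y /eqP; rewrite mulf_eq0 => /orP [/eqP -> | /eqP ->]; [left | right].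
Qed.

Lemma assoc_prime s w js kw :
  Bi js s -> s != 0 -> Bi kw w -> ~ dvds s w ->
  exists P : B -> Prop,
    [/\ homogeneous_ideal Bi P, height_one P & forall sg, dvds s (sg * w) -> P sg].
Proof.
move=> hs s0 hw nsw.
pose Q r := (exists j, Bi j r) /\ ~ dvds s (r * w).
pose I r := ann s (r * w).
have [r0 [[[j0 hr0] nr0] Hmax]] : exists r0, Q r0 /\ forall t, Q t ->
    (forall x, I r0 x -> I t x) -> forall x, I t x -> I r0 x.
  apply: noeth_max => //.
  - by move=> t _; apply: ann_ideal.
  - by exists 1; split; [exists 0; apply: hom1 | rewrite mul1r].
set P := I r0.
have HI : is_ideal P by apply: ann_ideal.
have P1 : ~ P 1 by rewrite /P /I /ann mul1r.
have hrw : Bi (j0 + kw) (r0 * w) by apply: homM.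
have Phom : forall x k, P x -> P (hc k x).
  move=> x k [t e]; exists (hc (k + (j0 + kw) - js) t).
  have h1 := comp_mulh HG x (k + (j0 + kw)) hrw.
  have h2 := comp_mulh HG t (k + (j0 + kw)) hs.
  rewrite addrK in h1.
  by rewrite mulrC -h1 [r0 * w * x]mulrC e h2.
have Phprime : forall a b i j, Bi i a -> Bi j b -> P (a * b) -> P a \/ P b.
  move=> a b i j ha hb Pab; apply: NNPP => /not_or_and [nPa nPb]; apply: nPb.
  have Qa : Q (a * r0).
    split; first by exists (i + j0); apply: homM.
    by rewrite -mulrA.
  have sub : forall x, I r0 x -> I (a * r0) x.
    move=> x [t e]; exists (a * t); rewrite /I /ann.
    have -> : x * (a * r0 * w) = a * (x * (r0 * w)) by ring.
    by rewrite e; ring.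
  apply: (Hmax _ Qa sub).
  by case: Pab => t e; exists t; rewrite /I /ann -e; ring.
have Pprime : is_prime_ideal P.
  split; [exact: HI | exact: P1 | idtac].
  move=> x y; exact: (hom_prime HG HI Phom Phprime).
have Ps : P s by exists (r0 * w); rewrite mulrC.
exists P; split.
- split => // x Px; exists (hsupp x), (fun i => hc i x); split.
  + exact: supp_uniq.
  + by move=> i; apply: comp_hom.
  + by move=> i; apply: Phom.
  + exact: comp_sum.
- split => //; split.
  + exists (fun k => if k == 0%N then (fun x : B => x = 0) else P); split.
    * by move=> k _; case: ifP => _ //; apply: zero_prime.
    * move=> k; rewrite ltnS leqn0 => /eqP -> /=; split.
        by move=> x ->; apply: iI0.
      by exists s; split => //; apply/eqP.
    * by [].
  + case=> c [Hp Hs He].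
    have Q1p := Hp 1%N isT.
    have [HI1 _ Q1pr] := Q1p.
    have Q1P : forall x, c 1%N x -> P x.
      by move=> x /((Hs 1%N isT).1) /He.
    have [p [Pp nQp]] : exists p, P p /\ ~ c 1%N p.
      have [_ [p [c2p nc1]]] := Hs 1%N isT; exists p; split => //; exact/He.
    have [q [Qq q0]] : exists q, c 1%N q /\ q != 0.
      have [_ [q [c1q nc0]]] := Hs 0%N isT; exists q; split => //.
      apply/negP => /eqP q0; apply: nc0; rewrite q0.
      by have [HI0 _ _] := Hp 0%N isT; apply: iI0.
    have ndiv : ~ dvds s (r0 * w) by [].
    case: (classic (forall p, P p -> exists p', P p' /\ (r0 * w) * p = s * p')) => [HA|HA].
      apply: ndiv; apply: (integral_ann HN Hnorm HI) => //.
      by exists s; split.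
    have [p0 [Pp0 Hp0]] : exists p0, P p0 /\ ~ exists p', P p' /\ (r0 * w) * p0 = s * p'.
      apply: NNPP => H; apply: HA => p1 Pp1; apply: NNPP => H1; apply: H.
      by exists p1.
    have [t0 e0] := Pp0.
    have nt0 : ~ P t0 by move=> Pt0; apply: Hp0; exists t0; split => //; rewrite -e0; ring.
    case: (classic (c 1%N p0)) => [Qp0|nQp0].
      apply: nQp; move: Pp => [tp ep].
      have : c 1%N (p * t0).
        have -> : p * t0 = tp * p0.
          apply: (mulfI s0).
          have -> : s * (p * t0) = p * (s * t0) by ring.
          rewrite -e0.
          have -> : p * (p0 * (r0 * w)) = p0 * (p * (r0 * w)) by ring.
          by rewrite ep; ring.
        exact: iIM.
      by case/Q1pr => // /Q1P.
    apply: ndiv; apply: (integral_ann HN Hnorm HI1).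
    + by exists q; split.
    + by [].
    + move=> q1 Qq1; have [t1 e1] := Q1P _ Qq1; exists t1; split; last by rewrite -e1; ring.
      have : c 1%N (t1 * p0).
        have -> : t1 * p0 = q1 * t0.
          apply: (mulfI s0).
          have -> : s * (t1 * p0) = (s * t1) * p0 by ring.
          rewrite -e1.
          have -> : q1 * (r0 * w) * p0 = q1 * (p0 * (r0 * w)) by ring.
          by rewrite e0; ring.
        by rewrite mulrC; apply: iIM.
      by case/Q1pr.
- move=> sg [t e]; exists (r0 * t); rewrite /I /ann.
  have -> : sg * (r0 * w) = r0 * (sg * w) by ring.
  by rewrite e; ring.
Qed.

End Assoc.


Lemma int_group_gen (D : int -> Prop) :
  D 0 -> (forall a b, D a -> D b -> D (a - b)) ->
  exists g : nat, D g%:Z /\ forall k, D k -> (g%:Z %| k)%Z.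
Proof.
move=> D0 DB.
have DN : forall a, D a -> D (- a) by move=> a Da; rewrite -sub0r; apply: DB.
have DMn : forall a (n : nat), D a -> D (a * n%:Z).
  move=> a n Da; elim: n => [|n IH]; first by rewrite mulr0.
  have -> : a * n.+1%:Z = a * n%:Z - (- a) by ring.
  by apply: DB => //; apply: DN.
have DM : forall a z, D a -> D (a * z).
  move=> a [n|n] Da; first exact: DMn.
  by rewrite NegzE mulrN; apply: DN; apply: DMn.
case: (classic (exists n : nat, (0 < n)%N && pb (D n%:Z))) => [ex|nex].
  have [g /andP [g0 /pbP Dg] gmin] := find_ex_minn ex.
  exists g; split => // k Dk.
  have gn0 : (g%:Z != 0) by rewrite eqz_nat -lt0n.
  apply/dvdz_mod0P.
  have Dr : D (k %% g%:Z)%Z.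
    have -> : (k %% g%:Z)%Z = k - (k %/ g%:Z)%Z * g%:Z by rewrite {2}(divz_eq k g%:Z); ring.
    by apply: DB => //; rewrite mulrC; apply: DM.
  have r0 := modz_ge0 k gn0.
  have rlt := ltz_mod k gn0.
  apply: NNPP => rne.
  have [m em] : exists m : nat, (k %% g%:Z)%Z = m%:Z.
    by exists `|(k %% g%:Z)%Z|%N; rewrite gez0_abs.
  have m0 : (0 < m)%N by rewrite lt0n; apply/eqP => m0; apply: rne; rewrite em m0.
  have Dm : D m%:Z by rewrite -em.
  have gm : (g <= m)%N.
    apply: gmin; rewrite m0 /=; by apply/pbP.
  move: rlt; rewrite em ger0_norm // ltz_nat => mg.
  by move: (leq_trans mg gm); rewrite ltnn.
exists 0%N; split => // k Dk.
have k0 : k = 0.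
  apply: NNPP => kne; apply: nex.
  exists `|k|%N; rewrite absz_gt0; apply/andP; split; first by apply/eqP.
  apply/pbP; case: (lerP 0 k) => k0.
    by rewrite gez0_abs.
  by rewrite ltz0_abs //; apply: DN.
by rewrite k0 dvdz0.
Qed.

Section Good.
Variables (B : idomainType) (Bi : int -> B -> Prop).
Hypothesis HG : Z_grading Bi.
Variable d : nat.
Hypothesis Hd : Pi_star Bi d.

Lemma good_degrees (P : B -> Prop) i :
  homogeneous_ideal Bi P -> height_one P ->
  exists z1 z2 j1 j2, [/\ Bi j1 z1, Bi j2 z2, ~ P z1, ~ P z2 &
     (d%:Z %| i + (j1 - j2))%Z].
Proof.
move=> Hh Hone.
have [[HI P1 Ppr] _] := Hone.
pose S := quot_degree_support Bi P.
pose D k := exists a b, [/\ S a, S b & k = a - b].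
have S0 : S 0 by exists 1; split => //; apply: hom1.
have SD : forall a b, S a -> S b -> S (a + b).
  move=> a b [x [hx nx]] [y [hy ny]]; exists (x * y); split; first exact: homM.
  by case/Ppr.
have D0 : D 0 by exists 0, 0; split => //; rewrite subr0.
have DB : forall a b, D a -> D b -> D (a - b).
  move=> a b [a1 [a2 [h1 h2 ->]]] [b1 [b2 [h3 h4 ->]]].
  exists (a1 + b2), (a2 + b1); split; try exact: SD.
  ring.
have [g [Dg Hg]] := int_group_gen D0 DB.
have gcd_set : is_gcd_set S g.
  split.
  - by move=> k Sk; apply: Hg; exists k, 0; split => //; rewrite subr0.
  - move=> c Hc; case: Dg => a [b [Sa Sb ->]].
    by apply: rpredB; apply: Hc.
have [dpos Hps] := Hd.
have cop : gcdn g d = 1%N.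
  apply/eqP; apply: contraT => ne.
  have gt1 : (1 < gcdn g d)%N.
    by rewrite ltn_neqAle eq_sym ne /= gcdn_gt0 dpos orbT.
  have pp := pdiv_prime gt1.
  suff : False by []. apply: (Hps (pdiv (gcdn g d))).
  - split => //; exists P; split => //; exists g; split => //.
    exact: dvdn_trans (pdiv_dvd _) (dvdn_gcdl _ _).
  - exact: dvdn_trans (pdiv_dvd _) (dvdn_gcdr _ _).
have [u [v euv]] := Bezoutz g%:Z d%:Z.
have gz : gcdz g%:Z d%:Z = 1 by rewrite /gcdz /= cop.
rewrite gz in euv.
have DM : forall a z, D a -> D (a * z).
  move=> a z Da.
  have DN : forall a, D a -> D (- a) by move=> a' Da'; rewrite -sub0r; apply: DB.
  have DMn : forall (n : nat), D (a * n%:Z).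
    elim=> [|n IH]; first by rewrite mulr0.
    have -> : a * n.+1%:Z = a * n%:Z - (- a) by ring.
    by apply: DB => //; apply: DN.
  case: z => [n|n]; first exact: DMn.
  by rewrite NegzE mulrN; apply: DN; apply: DMn.
have [j1 [j2 [[z1 [h1 n1]] [z2 [h2 n2]] e]]] := DM _ (- i * u) Dg.
exists z1, z2, j1, j2; split => //.
rewrite -e; apply/dvdzP; exists (i * v).
have -> : i + g%:Z * (- i * u) = i * (1 - u * g%:Z) by ring.
by rewrite -euv; ring.
Qed.

End Good.


Lemma prime_pow (B : idomainType) (P : B -> Prop) z n :
  is_prime_ideal P -> P (z ^+ n) -> P z.
Proof.
case=> HI P1 Ppr; elim: n => [|n IH]; first by rewrite expr0.
by rewrite exprS => /Ppr [].
Qed.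

Lemma dvds_sum (B : idomainType) s (I : Type) (r : seq I) (F : I -> B) :
  (forall k, dvds s (F k)) -> dvds s (\sum_(k <- r) F k).
Proof.
move=> H; elim: r => [|a r IH]; first by exists 0; rewrite big_nil mulr0.
by rewrite big_cons; case: (H a) => t1 ->; case: IH => t2 ->; exists (t1 + t2); rewrite mulrDr.
Qed.

Section Main.
Variables (B : idomainType) (Bi : int -> B -> Prop).
Hypothesis HG : Z_grading Bi.
Hypothesis HN : noetherian B.
Hypothesis Hnorm : normal_domain B.
Variable d' : nat.
Local Notation d := d'.+1.
Hypothesis Hps : Pi_star Bi d.
Hypothesis dunit : (d%:R : B) \is a GRing.unit.
Local Notation A := (veronese Bi d).
Local Notation hc := (hc Bi).
Local Notation hsupp := (hsupp Bi).
Variable delta : B -> B.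
Hypothesis Hdel : derivation_on A delta.

Lemma dpos : (0 < d)%N. Proof. by []. Qed.

Lemma Posz_d : d%:Z = d'%:Z + 1.
Proof. by rewrite -addn1 PoszD. Qed.

Lemma A_hom j h : Bi j h -> (d%:Z %| j)%Z -> A h.
Proof. move=> hh dj; exact: (ver_hom' HG hh dj). Qed.

Lemma A_pow i x : Bi i x -> A (x ^+ d).
Proof. by move=> hx; apply: (@ver_hom _ _ HG d (i)); apply: homX. Qed.

Lemma powA x : A x -> forall n, delta (x ^+ n.+1) = n.+1%:R * x ^+ n * delta x.
Proof.
apply: pow_rule.
- by move=> a b; apply: verM.
- by move=> a b; apply: (dM Hdel).
Qed.

Lemma local_step x i z1 z2 j1 j2 :
  Bi i x -> Bi j1 z1 -> Bi j2 z2 -> (d%:Z %| i + (j1 - j2))%Z ->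
  dvds (x ^+ d') ((z1 ^+ d * (z2 ^+ d) ^+ d') * delta (x ^+ d)).
Proof.
move=> hx h1 h2 dv.
set a := x * (z1 * z2 ^+ d').
have ha : A a.
  apply: (@A_hom (i + (j1 + j2 * d'%:Z))).
    by apply: homM => //; apply: homM => //; apply: homX.
  have -> : i + (j1 + j2 * d'%:Z) = (i + (j1 - j2)) + j2 * d%:Z by rewrite Posz_d; ring.
  by rewrite rpredD // dvdz_mull.
set X := x ^+ d.
have hX : A X by apply: A_pow hx.
have he : A (z1 ^+ d) by apply: A_pow h1.
have hc' : A (z2 ^+ d) by apply: A_pow h2.
set sg := z1 ^+ d * (z2 ^+ d) ^+ d'.
have hsg : A sg by apply: verM => //; apply: verX.
have ead : a ^+ d = X * sg.
  rewrite /a /X /sg !exprMn -!exprM.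
  by rewrite [(d' * d)%N]mulnC; ring.
have e1 := powA ha d'.
rewrite ead (dM Hdel hX hsg) in e1.
have -> : sg * delta X = d%:R * a ^+ d' * delta a - X * delta sg.
  by rewrite -e1; ring.
exists (d%:R * (z1 * z2 ^+ d') ^+ d' * delta a - x * delta sg).
by rewrite /a /X exprMn exprSr; ring.
Qed.

Lemma main_div x i : Bi i x -> x != 0 -> dvds (x ^+ d') (delta (x ^+ d)).
Proof.
move=> hx x0.
set X := x ^+ d.
rewrite (comp_sum HG (delta X)); apply: dvds_sum => k.
set w := hc k (delta X).
have hw : Bi k w by apply: comp_hom.
have hs : Bi (i * d'%:Z) (x ^+ d') by apply: homX.
have s0 : x ^+ d' != 0 by apply: expf_neq0.
apply: NNPP => nd.
have [P [Hh Hone HP]] := assoc_prime HG HN Hnorm hs s0 hw nd.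
have [z1 [z2 [j1 [j2 [h1 h2 n1 n2 dv]]]]] := good_degrees HG Hps i Hh Hone.
have := local_step hx h1 h2 dv.
set sg := z1 ^+ d * (z2 ^+ d) ^+ d'.
have hsg : Bi (j1 * d%:Z + (j2 * d%:Z) * d'%:Z) sg.
  by apply: (homM HG); [exact: (homX HG d h1) | exact: (homX HG d' (homX HG d h2))].
move=> [t et].
have : dvds (x ^+ d') (sg * w).
  exists (hc (k + (j1 * d%:Z + (j2 * d%:Z) * d'%:Z) - i * d'%:Z) t).
  have := comp_mulh HG (delta X) (k + (j1 * d%:Z + (j2 * d%:Z) * d'%:Z)) hsg.
  rewrite addrK => <-.
  by rewrite et (comp_mulh HG _ _ hs).
move/HP => Psg.
have [Pp _] := Hone.
case: (Pp) => _ _ Ppr.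
case/Ppr: Psg => /(prime_pow Pp) //.
by move/(prime_pow Pp).
Qed.

End Main.


Section Construct.
Variables (B : idomainType) (Bi : int -> B -> Prop).
Hypothesis HG : Z_grading Bi.
Hypothesis HN : noetherian B.
Hypothesis Hnorm : normal_domain B.
Variable d' : nat.
Local Notation d := d'.+1.
Hypothesis Hps : Pi_star Bi d.
Hypothesis dunit : (d%:R : B) \is a GRing.unit.
Local Notation A := (veronese Bi d).
Local Notation hc := (hc Bi).
Local Notation hsupp := (hsupp Bi).
Variable delta : B -> B.
Hypothesis Hdel : derivation_on A delta.

Lemma dn0 : (d%:R : B) != 0.
Proof. by apply: contraTneq dunit => ->; rewrite unitr0. Qed.

Definition Dh (x : B) : B :=
  if x == 0 then 0 else
  epsilon (inhabits 0) (fun r => d%:R * x ^+ d' * r = delta (x ^+ d)).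

Lemma Dh0 : Dh 0 = 0.
Proof. by rewrite /Dh eqxx. Qed.

Lemma Dh_spec i h : Bi i h -> d%:R * h ^+ d' * Dh h = delta (h ^+ d).
Proof.
move=> hh; rewrite /Dh; case: eqP => [->|/eqP h0].
  by rewrite mulr0 expr0n /= (d0 HG Hdel).
apply: (epsilon_spec (inhabits 0) (fun r => d%:R * h ^+ d' * r = delta (h ^+ d))).
have [t et] := main_div HG HN Hnorm Hps Hdel hh h0.
exists ((d%:R)^-1 * t); rewrite et.
have -> : d%:R * h ^+ d' * ((d%:R)^-1 * t) = (d%:R * (d%:R)^-1) * (h ^+ d' * t) by ring.
by rewrite mulrV // mul1r.
Qed.

Lemma Dh_uniq i h r : Bi i h -> h != 0 -> d%:R * h ^+ d' * r = delta (h ^+ d) -> Dh h = r.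
Proof.
move=> hh h0 e; apply: (mulfI (x := d%:R * h ^+ d')).
  by rewrite mulf_neq0 ?dn0 ?expf_neq0.
by rewrite e (Dh_spec hh).
Qed.

Lemma Dh_mul i j u v : Bi i u -> Bi j v -> Dh (u * v) = u * Dh v + Dh u * v.
Proof.
move=> hu hv.
case: (eqVneq u 0) => [->|u0]; first by rewrite !(mul0r, mulr0, Dh0, addr0, add0r).
case: (eqVneq v 0) => [->|v0]; first by rewrite !(mul0r, mulr0, Dh0, addr0, add0r).
apply: (Dh_uniq (homM HG hu hv)); first by rewrite mulf_neq0.
rewrite [(u * v) ^+ d]exprMn (dM Hdel (A_pow HG d' hu) (A_pow HG d' hv)).
rewrite -(Dh_spec hu) -(Dh_spec hv) !exprMn !exprSr; ring.
Qed.

Lemma Dh_ver i h : Bi i h -> A h -> Dh h = delta h.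
Proof.
move=> hh Ah; case: (eqVneq h 0) => [->|h0]; first by rewrite Dh0 (d0 HG Hdel).
by apply: (Dh_uniq hh h0); rewrite (powA HG Hdel Ah).
Qed.

Lemma Dh_add i u v : Bi i u -> Bi i v -> Dh (u + v) = Dh u + Dh v.
Proof.
move=> hu hv.
case: (eqVneq u 0) => [->|u0]; first by rewrite add0r Dh0 add0r.
set W := u ^+ d'.
have hW : Bi (i * d'%:Z) W by apply: homX.
have huv := homD HG hu hv.
have degd : forall x, Bi i x -> Bi (i * d%:Z) (x * W).
  move=> x hx; have := homM HG hx hW.
  by rewrite Posz_d mulrDr mulr1 addrC.
have Ad : forall x, Bi i x -> A (x * W) by move=> x hx; apply: (ver_hom HG (degd _ hx)).
have e1 : delta ((u + v) * W) = delta (u * W) + delta (v * W).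
  by rewrite mulrDl (dD Hdel (Ad _ hu) (Ad _ hv)).
rewrite -(Dh_ver (degd _ huv) (Ad _ huv)) -(Dh_ver (degd _ hu) (Ad _ hu)) in e1.
rewrite -(Dh_ver (degd _ hv) (Ad _ hv)) in e1.
rewrite (Dh_mul huv hW) (Dh_mul hu hW) (Dh_mul hv hW) in e1.
have W0 : W != 0 by apply: expf_neq0.
apply/eqP; rewrite -subr_eq0; apply/eqP.
apply: (mulIf W0); rewrite mul0r.
have -> : (Dh (u + v) - (Dh u + Dh v)) * W =
  (u + v) * Dh W + Dh (u + v) * W - (u * Dh W + Dh u * W + (v * Dh W + Dh v * W)) by ring.
by rewrite e1 subrr.
Qed.

Lemma Dh_opp i u : Bi i u -> Dh (- u) = - Dh u.
Proof.
move=> hu; apply/eqP; rewrite -subr_eq0 opprK; apply/eqP.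
by rewrite -(Dh_add (homN HG hu) hu) addNr Dh0.
Qed.

Definition Dx (x : B) : B := \sum_(k <- hsupp x) Dh (hc k x).

Lemma Dx_sup x t : uniq t -> (forall k, k \notin t -> hc k x = 0) ->
  Dx x = \sum_(k <- t) Dh (hc k x).
Proof.
move=> ut Ht; rewrite /Dx; apply: sum_eq_over => //.
- exact: supp_uniq.
- by move=> k /(comp_out) ->; rewrite Dh0.
- by move=> k /Ht ->; rewrite Dh0.
Qed.

Lemma Dx_add x y : Dx (x + y) = Dx x + Dx y.
Proof.
set t := undup (hsupp x ++ hsupp y ++ hsupp (x + y)).
have ut : uniq t by apply: undup_uniq.
have ot : forall z k, (z = x \/ z = y \/ z = x + y) -> k \notin t -> hc k z = 0.
  move=> z k hz; rewrite mem_undup !mem_cat !negb_or => /andP [nx /andP [ny nxy]].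
  by case: hz => [->|[->|->]]; apply: comp_out.
rewrite (@Dx_sup (x + y) t ut); last by move=> k; apply: ot; right; right.
rewrite (@Dx_sup x t ut); last by move=> k; apply: ot; left.
rewrite (@Dx_sup y t ut); last by move=> k; apply: ot; right; left.
rewrite -big_split; apply: eq_bigr => k _.
by rewrite comp_add // (Dh_add (comp_hom HG k x) (comp_hom HG k y)).
Qed.

Lemma Dx0 : Dx 0 = 0.
Proof.
have h := Dx_add 0 0; rewrite addr0 in h.
by apply: (addrI (Dx 0)); rewrite -h addr0.
Qed.

Lemma Dx_sum (I : Type) (r : seq I) (F : I -> B) :
  Dx (\sum_(k <- r) F k) = \sum_(k <- r) Dx (F k).
Proof. by apply: big_morph; [apply: Dx_add | apply: Dx0]. Qed.

Lemma Dx_hom j h : Bi j h -> Dx h = Dh h.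
Proof.
move=> hh; rewrite (@Dx_sup h [:: j]) //; last first.
  by move=> k; rewrite inE => /negbTE kj; rewrite (comp_homE HG _ hh) kj.
by rewrite big_seq1 (hom_comp_self HG hh).
Qed.

Lemma Dx_mul x y : Dx (x * y) = x * Dx y + Dx x * y.
Proof.
have ex := comp_sum HG x; have ey := comp_sum HG y.
have -> : x * y = \sum_(i <- hsupp x) \sum_(j <- hsupp y) hc i x * hc j y.
  by rewrite {1}ex {1}ey mulr_suml; apply: eq_bigr => i _; rewrite mulr_sumr.
rewrite Dx_sum.
rewrite (eq_bigr (fun i => \sum_(j <- hsupp y) (hc i x * Dh (hc j y) + Dh (hc i x) * hc j y))); last first.
  move=> i _; rewrite Dx_sum; apply: eq_bigr => j _.
  rewrite (Dx_hom (homM HG (comp_hom HG i x) (comp_hom HG j y))).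
  exact: (Dh_mul (comp_hom HG i x) (comp_hom HG j y)).
have L1 : x * Dx y = \sum_(i <- hsupp x) \sum_(j <- hsupp y) hc i x * Dh (hc j y).
  by rewrite {1}ex /Dx mulr_suml; apply: eq_bigr => i _; rewrite mulr_sumr.
have L2 : Dx x * y = \sum_(i <- hsupp x) \sum_(j <- hsupp y) Dh (hc i x) * hc j y.
  by rewrite /Dx {1}ey mulr_suml; apply: eq_bigr => i _; rewrite mulr_sumr.
rewrite L1 L2 -big_split; apply: eq_bigr => i _.
by rewrite -big_split.
Qed.

Lemma Dx_der : derivation Dx.
Proof. by split; [apply: Dx_add | apply: Dx_mul]. Qed.

Lemma Dx_ext : extends_on A delta Dx.
Proof.
move=> x Ax; have Ax' := Ax; case: Ax' => s [f [us hf ex]].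
rewrite ex Dx_sum (d_sum HG Hdel); last by move=> k; apply: (ver_hom HG (hf k)).
apply: eq_bigr => k _; rewrite (Dx_hom (hf k)).
exact: (Dh_ver (hf k) (ver_hom HG (hf k))).
Qed.

Lemma Dx_uniq D' : derivation D' -> extends_on A delta D' -> D' = Dx.
Proof.
move=> [Dadd Dmul] Dext; apply: functional_extensionality => x.
have D'0 : D' 0 = 0.
  have h := Dadd 0 0; rewrite addr0 in h.
  by apply: (addrI (D' 0)); rewrite -h addr0.
rewrite {1}(comp_sum HG x) /Dx.
rewrite (big_morph D' Dadd D'0); apply: eq_bigr => k _.
set h := hc k x; have hh : Bi k h by apply: comp_hom.
case: (eqVneq h 0) => [->|h0]; first by rewrite D'0 Dh0.
symmetry; apply: (Dh_uniq hh h0).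
rewrite -(Dext _ (A_pow HG d' hh)).
by rewrite (pow_rule (S := fun _ => True)).
Qed.

End Construct.


Lemma natr_neq0 (B : idomainType) n : char_zero B -> (0 < n)%N -> (n%:R : B) != 0.
Proof.
move=> Hc n0; rewrite natf_neq0_pchar /pnat n0 /=.
by apply/allP => p _; rewrite inE /= Hc.
Qed.

Section Degree.
Variables (B : idomainType) (Bi : int -> B -> Prop).
Hypothesis HG : Z_grading Bi.
Hypothesis Hc : char_zero B.
Variable d : nat.
Local Notation A := (veronese Bi d).
Variable delta : B -> B.
Hypothesis Hdel : derivation_on A delta.
Local Notation dn n x := (iter n delta x).

Lemma iterA n x : A x -> A (dn n x).
Proof. by move=> Ax; elim: n => [|n IH] //=; apply: (dA Hdel). Qed.

Lemma iter0 n : dn n 0 = 0.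
Proof. by elim: n => [|n IH] //=; rewrite IH (d0 HG Hdel). Qed.

Lemma iterDx n x y : A x -> A y -> dn n (x + y) = dn n x + dn n y.
Proof.
move=> Ax Ay; elim: n => [|n IH] //=.
by rewrite IH (dD Hdel) //; apply: iterA.
Qed.

Lemma iterN n x : A x -> dn n (- x) = - dn n x.
Proof.
move=> Ax; elim: n => [|n IH] //=.
by rewrite IH (dN HG Hdel) //; apply: iterA.
Qed.

Lemma iterB n x y : A x -> A y -> dn n (x - y) = dn n x - dn n y.
Proof. by move=> Ax Ay; rewrite iterDx ?iterN //; apply: (verN HG). Qed.

Lemma d_muln x c : A x -> delta (x *+ c) = delta x *+ c.
Proof.
move=> Ax; elim: c => [|c IH]; first by rewrite !mulr0n (d0 HG Hdel).
rewrite !mulrS (dD Hdel) ?IH //.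
by rewrite -mulr_natl; apply: (verM HG) => //; apply: (ver_nat HG).
Qed.

Lemma iter_ge n m x : dn n x = 0 -> dn (m + n) x = 0.
Proof. by move=> e; rewrite iterD e iter0. Qed.

Lemma iter_le n m x : (n <= m)%N -> dn n x = 0 -> dn m x = 0.
Proof. by move=> nm e; rewrite -(subnK nm); apply: iter_ge. Qed.

Lemma leib n x y : A x -> A y ->
  dn n (x * y) = \sum_(i < n.+1) (dn i x * dn (n - i) y) *+ 'C(n, i).
Proof.
move=> Ax Ay; elim: n => [|n IH].
  by rewrite big_ord_recl big_ord0 addr0 /= mulr1n.
have AT : forall i j, A (dn i x * dn j y).
  by move=> i j; apply: (verM HG); apply: iterA.
rewrite iterS IH (d_sum HG Hdel); last by move=> i; rewrite -mulr_natl; apply: (verM HG) => //; apply: (ver_nat HG).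
set T := fun i => dn i x * dn (n.+1 - i) y.
rewrite (eq_bigr (fun i : 'I_n.+1 => T i *+ 'C(n, i) + T (i.+1) *+ 'C(n, i))); last first.
  move=> [i ilt] _ /=; rewrite d_muln; last by apply: (verM HG); apply: iterA.
  rewrite (dM Hdel); [ | by apply: iterA | by apply: iterA].
  by rewrite -mulrnDl /T subSn // subSS.
rewrite big_split /=.
have -> : \sum_(i < n.+2) dn i x * dn (n.+1 - i) y *+ 'C(n.+1, i) =
  \sum_(i < n.+2) T i *+ 'C(n.+1, i) by [].
rewrite [in RHS]big_ord_recl /= bin0 mulr1n.
rewrite [in RHS](eq_bigr (fun i : 'I_n.+1 => T (i.+1) *+ 'C(n, i.+1) + T (i.+1) *+ 'C(n, i))); last first.
  by move=> i _; rewrite /bump /= add1n binS mulrnDr.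
rewrite big_split /= addrA; congr (_ + _).
have e1 : \sum_(i < n.+2) T i *+ 'C(n, i) = \sum_(i < n.+1) T i *+ 'C(n, i).
  by rewrite big_ord_recr /= bin_small // mulr0n addr0.
rewrite -e1 big_ord_recl /= bin0 mulr1n.
by [].
Qed.
Definition dle x n := dn n.+1 x = 0.

Lemma dle_mul x y p q : A x -> A y -> dle x p -> dle y q -> dle (x * y) (p + q).
Proof.
move=> Ax Ay hx hy; rewrite /dle leib //; apply: big1 => [[i ilt]] _ /=.
case: (leqP i p) => ip.
  rewrite (@iter_le q.+1 ((p + q).+1 - i) y) ?mulr0 ?mul0rn //.
  lia.
by rewrite (@iter_le p.+1 i x) ?mul0r ?mul0rn.
Qed.

Lemma dle_mono x p q : (p <= q)%N -> dle x p -> dle x q.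
Proof. by move=> pq; apply: iter_le. Qed.

Lemma dle_add x y p : A x -> A y -> dle x p -> dle y p -> dle (x + y) p.
Proof. by move=> Ax Ay hx hy; rewrite /dle iterDx // hx hy addr0. Qed.

Lemma dle_sub x y p : A x -> A y -> dle x p -> dle y p -> dle (x - y) p.
Proof. by move=> Ax Ay hx hy; rewrite /dle iterB // hx hy subr0. Qed.

Lemma dle_nat n : dle n%:R 0.
Proof. by rewrite /dle /= (d_nat HG Hdel). Qed.

Lemma dle_d x p : dle x p -> dle (delta x) p.-1.
Proof.
rewrite /dle; case: p => [|p] /= e.
  by rewrite e (d0 HG Hdel).
by rewrite -iterSr.
Qed.

Definition dexact x n := dn n x != 0 /\ dle x n.

Lemma dexact_mul x y p q : A x -> A y -> dexact x p -> dexact y q -> dexact (x * y) (p + q).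
Proof.
move=> Ax Ay [nx hx] [ny hy]; split; last exact: dle_mul.
rewrite leib // (bigD1 (@Ordinal (p + q).+1 p (leq_addr q p))) //= big1 ?addr0.
  rewrite addKn -mulr_natl mulf_neq0 ?mulf_neq0 //.
  by apply: natr_neq0 => //; rewrite bin_gt0 leq_addr.
move=> [i ilt] /= ne.
case: (ltngtP i p) => ip.
- rewrite (@iter_le q.+1 (p + q - i) y) ?mulr0 ?mul0rn //.
  by rewrite ltn_subRL ltn_add2r.
- by rewrite (@iter_le p.+1 i x) ?mul0r ?mul0rn.
- by case/eqP: ne; apply: val_inj.
Qed.

Lemma dexact_exists x : A x -> x != 0 -> locally_nilpotent_on A delta -> exists n, dexact x n.
Proof.
move=> Ax x0 HLN.
have ex : exists n, dn n x == 0 by case: (HLN x Ax) => n e; exists n; apply/eqP.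
have [n /eqP en nmin] := find_ex_minn ex.
case: n en nmin => [|n] en nmin; first by move: x0; rewrite -en eqxx.
exists n; split => //; apply/negP => /eqP e.
by have := nmin n (introT eqP e); rewrite ltnn.
Qed.

Lemma dexact_pow x p k : A x -> dexact x p -> dexact (x ^+ k) (k * p).
Proof.
move=> Ax hx; elim: k => [|k IH].
  rewrite expr0 mul0n; split; last exact: (dle_nat 1).
  by rewrite /= oner_neq0.
rewrite exprS mulSn; apply: dexact_mul => //; first by apply: (verX HG).
Qed.

End Degree.


Fixpoint beta (B : idomainType) (delta : B -> B) (dd : nat) (Y : B) (k : nat) : B :=
  match k with
  | 0 => 1
  | k'.+1 => beta delta dd Y k' * delta Y + dd%:R * Y * delta (beta delta dd Y k')
             - dd%:R * k'%:R * delta Y * beta delta dd Y k'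
  end.

Section LN.
Variables (B : idomainType) (Bi : int -> B -> Prop).
Hypothesis HG : Z_grading Bi.
Hypothesis HN : noetherian B.
Hypothesis Hnorm : normal_domain B.
Hypothesis Hc : char_zero B.
Variable d' : nat.
Local Notation d := d'.+1.
Hypothesis Hps : Pi_star Bi d.
Hypothesis dunit : (d%:R : B) \is a GRing.unit.
Local Notation A := (veronese Bi d).
Local Notation hc := (hc Bi).
Local Notation hsupp := (hsupp Bi).
Variable delta : B -> B.
Hypothesis Hdel : derivation_on A delta.
Hypothesis HLN : locally_nilpotent_on A delta.
Local Notation D := (Dx Bi d' delta).
Local Notation dn n x := (iter n delta x).

Lemma HD : derivation D.
Proof. exact: (Dx_der HG HN Hnorm Hps dunit Hdel). Qed.
Lemma Hext : extends_on A delta D.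
Proof. exact: (Dx_ext HG HN Hnorm Hps dunit Hdel). Qed.

Lemma D_add x y : D (x + y) = D x + D y.
Proof. by case: HD => H _; apply: H. Qed.
Lemma D_mul x y : D (x * y) = x * D y + D x * y.
Proof. by case: HD => _ H; apply: H. Qed.
Lemma D_0 : D 0 = 0.
Proof.
have h := D_add 0 0; rewrite addr0 in h.
by apply: (addrI (D 0)); rewrite -h addr0.
Qed.

Lemma iterD_add n x y : iter n D (x + y) = iter n D x + iter n D y.
Proof. by elim: n => [|n IH] //=; rewrite IH D_add. Qed.
Lemma iterD_0 n : iter n D 0 = 0.
Proof. by elim: n => [|n IH] //=; rewrite IH D_0. Qed.

Lemma keyK i b : Bi i b -> d%:R * b ^+ d * D b = b * delta (b ^+ d).
Proof.
move=> hb; rewrite (Dx_hom HG _ _ hb) -(Dh_spec HG HN Hnorm Hps dunit Hdel hb).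
rewrite exprSr; ring.
Qed.

Lemma betaA Y k : A Y -> A (beta delta d Y k).
Proof.
move=> AY; elim: k => [|k IH] /=; first exact: (ver1 HG).
have Ad := dA Hdel.
apply: (verB HG); first apply: (verD HG).
- by apply: (verM HG) => //; apply: Ad.
- by apply: (verM HG); [apply: (verM HG) => //; apply: (ver_nat HG) | apply: Ad].
- apply: (verM HG) => //; apply: (verM HG); last by apply: Ad.
  by apply: (verM HG); apply: (ver_nat HG).
Qed.

Lemma dnat_pow k : (d%:R : B) ^+ k = (d ^ k)%:R.
Proof. by rewrite natrX. Qed.

Lemma betaU i b : Bi i b -> forall k,
  d%:R ^+ k * (b ^+ d) ^+ k * iter k D b = b * beta delta d (b ^+ d) k.
Proof.
move=> hb; set Y := b ^+ d.
have AY : A Y by apply: (A_pow HG d' hb).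
have hK := keyK hb; rewrite -/Y in hK.
elim=> [|k IH]; first by rewrite /= !expr0 !mul1r mulr1.
set E := iter k D b.
set c := d%:R ^+ k * Y ^+ k.
have Ac : A c.
  by apply: (verM HG); [rewrite dnat_pow; apply: (ver_nat HG) | apply: (verX HG)].
have Abt := betaA k AY.
set bt := beta delta d Y k in IH Abt *.
have h1 := D_mul c E.
have h2 := D_mul b bt.
rewrite (Hext Abt) in h2.
have h3 : D c = d%:R ^+ k * delta (Y ^+ k).
  rewrite (Hext Ac) /c (dM Hdel) ?dnat_pow ?(d_nat HG Hdel) ?mul0r ?addr0 //.
  - exact: (ver_nat HG).
  - exact: (verX HG).
have h4 : Y * delta (Y ^+ k) = k%:R * delta Y * Y ^+ k.
  case: k {IH E c Ac bt Abt h1 h2 h3} => [|k]; first by rewrite expr0 (d1 HG Hdel) mulr0 mul0r mul0r.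
  by rewrite (powA HG Hdel AY) exprS; ring.
have e1 : c * D E = b * delta bt + D b * bt - d%:R ^+ k * delta (Y ^+ k) * E.
  by rewrite -h2 -IH h1 h3; ring.
have -> : d%:R ^+ k.+1 * Y ^+ k.+1 * iter k.+1 D b = d%:R * Y * (c * D E).
  by rewrite /c /E /= !exprS; ring.
rewrite e1 /=.
have -> : d%:R * Y * (b * delta bt + D b * bt - d%:R ^+ k * delta (Y ^+ k) * E) =
   d%:R * Y * b * delta bt + (d%:R * Y * D b) * bt - d%:R * d%:R ^+ k * (Y * delta (Y ^+ k)) * E
   by ring.
rewrite hK h4.
have -> : d%:R * d%:R ^+ k * (k%:R * delta Y * Y ^+ k) * E = d%:R * k%:R * delta Y * (c * E)
  by rewrite /c; ring.
have IH' : c * E = b * bt := IH.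
rewrite IH' /=; rewrite -/bt; ring.
Qed.

Lemma dle_pow x p n : A x -> dle delta x p -> dle delta (x ^+ n) (n * p).
Proof.
move=> Ax hx; elim: n => [|n IH]; first by rewrite expr0 mul0n; apply: (dle_nat HG Hdel 1).
by rewrite exprS mulSn; apply: (dle_mul HG Hdel) => //; apply: (verX HG).
Qed.

Lemma beta_deg b m' : A b -> dle delta b m'.+1 ->
  forall k, dle delta (beta delta d b k) (k * m').
Proof.
move=> Ab hb.
have AdY : A (delta b) by apply: (dA Hdel).
have hdY : dle delta (delta b) m' by apply: (dle_d HG Hdel hb).
have Ad := dA Hdel.
elim=> [|k IH] /=; first by rewrite mul0n; apply: (dle_nat HG Hdel 1).
have Abt := betaA k Ab.
set bt := beta delta d b k in Abt IH *.
have Adn : A (d%:R : B) by apply: (ver_nat HG).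
have Akn : A (k%:R : B) by apply: (ver_nat HG).
apply: (dle_sub HG Hdel); first apply: (verD HG).
- by apply: (verM HG).
- by apply: (verM HG); [apply: (verM HG) | apply: Ad].
- by apply: (verM HG) => //; apply: (verM HG) => //; apply: (verM HG).
- apply: (dle_add Hdel).
  + by apply: (verM HG).
  + by apply: (verM HG); [apply: (verM HG) | apply: Ad].
  + by rewrite mulSn addnC; apply: (dle_mul HG Hdel).
  + case: (posnP (k * m')) => km.
      have : delta bt = 0 by move: IH; rewrite km.
      by move=> ->; rewrite mulr0; apply: (iter0 HG Hdel).
    apply: (dle_mono HG Hdel (p := (0 + m'.+1) + (k * m').-1)); first by lia.
    apply: (dle_mul HG Hdel); [by apply: (verM HG) | by apply: Ad | | by apply: (dle_d HG Hdel)].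
    by apply: (dle_mul HG Hdel) => //; apply: (dle_nat HG Hdel).
- apply: (dle_mono HG Hdel (p := 0 + 0 + m' + k * m')); first by rewrite mulSn; lia.
  apply: (dle_mul HG Hdel) => //; first by apply: (verM HG) => //; apply: (verM HG).
  apply: (dle_mul HG Hdel) => //; first by apply: (verM HG).
  by apply: (dle_mul HG Hdel) => //; apply: (dle_nat HG Hdel).
Qed.

Lemma LN_hom i b : Bi i b -> exists n, iter n D b = 0.
Proof.
move=> hb; case: (eqVneq b 0) => [->|b0]; first by exists 0%N.
set Y := b ^+ d.
have AY : A Y by apply: (A_pow HG d' hb).
have Y0 : Y != 0 by apply: expf_neq0.
have dn0 : (d%:R : B) != 0 by apply: natr_neq0.
have hK := keyK hb; rewrite -/Y in hK.
have [m [nm hm]] := dexact_exists AY Y0 HLN.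
case: m nm hm => [|m'] nm hm.
  exists 1%N => /=.
  have dY : delta Y = 0 by exact: hm.
  move: hK; rewrite dY mulr0 => /eqP; rewrite !mulf_eq0 (negbTE dn0) (negbTE Y0) /=.
  by move/eqP.
set k := m'.+2.
set E := iter k D b.
have hU := betaU hb k; rewrite -/Y -/E in hU.
set bt := beta delta d Y k in hU.
set c := d%:R ^+ k * Y ^+ k in hU.
have Ac : A c.
  by apply: (verM HG); [rewrite dnat_pow; apply: (ver_nat HG) | apply: (verX HG)].
have c0 : c != 0 by rewrite mulf_neq0 ?expf_neq0.
have Abt : A bt by apply: betaA.
set z := E ^+ d.
set a := c ^+ d.
have eaz : a * z = Y * bt ^+ d.
  by rewrite /a /z -exprMn hU exprMn.
have Aa : A a by apply: (verX HG).
have a0 : a != 0 by apply: expf_neq0.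
have AYb : A (Y * bt ^+ d) by apply: (verM HG) => //; apply: (verX HG).
have Az : A z by apply: (ver_cancel HG Aa a0); rewrite eaz.
exists k.
suff zz : z = 0 by move/eqP: zz; rewrite expf_eq0 => /andP [_ /eqP].
apply/eqP; apply: contraT => z0.
have [e he] := dexact_exists Az z0 HLN.
have hdk : dexact delta (d%:R ^+ k : B) 0.
  split; first by rewrite /= expf_neq0.
  by rewrite dnat_pow; apply: (dle_nat HG Hdel).
have hc : dexact delta c (0 + k * m'.+1).
  apply: (dexact_mul HG Hc Hdel) => //; first by rewrite dnat_pow; apply: (ver_nat HG).
  - exact: (verX HG).
  - exact: (dexact_pow HG Hc Hdel).
have ha : dexact delta a (d * (0 + k * m'.+1)) by apply: (dexact_pow HG Hc Hdel).
have haz := dexact_mul HG Hc Hdel Aa Az ha he.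
have hb2 : dle delta (Y * bt ^+ d) (m'.+1 + d * (k * m')).
  apply: (dle_mul HG Hdel) => //; first exact: (verX HG).
  by apply: dle_pow => //; apply: beta_deg.
case: haz => nz _; case/negP: nz; apply/eqP.
rewrite eaz; apply: (iter_le HG Hdel _ hb2).
rewrite /k; nia.
Qed.

Lemma LN_all : locally_nilpotent D.
Proof.
move=> x; rewrite (comp_sum HG x).
elim: (hsupp x) => [|a r [n2 IH]]; first by exists 0%N; rewrite big_nil.
have [n1 h1] := LN_hom (comp_hom HG a x).
exists (n1 + n2)%N; rewrite big_cons iterD_add.
rewrite [in X in X + _]addnC !iterD h1 IH !iterD_0 addr0.
by [].
Qed.

End LN.


Theorem theorem3p2 (B : idomainType) (Bi : int -> B -> Prop) :
  Z_grading Bi -> noetherian B -> normal_domain B -> char_zero B -> e_eq1 Bi ->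
  forall d : nat, Pi_star Bi d -> (d%:R : B) \is a GRing.unit ->
  (forall delta : B -> B, derivation_on (veronese Bi d) delta ->
     exists D : B -> B,
       (derivation D /\ extends_on (veronese Bi d) delta D) /\
       (forall D' : B -> B, derivation D' -> extends_on (veronese Bi d) delta D' ->
          D' = D)) /\
  (forall delta : B -> B, derivation_on (veronese Bi d) delta ->
     locally_nilpotent_on (veronese Bi d) delta ->
     exists D : B -> B,
       (derivation D /\ locally_nilpotent D /\ extends_on (veronese Bi d) delta D) /\
       (forall D' : B -> B, derivation D' -> locally_nilpotent D' ->
          extends_on (veronese Bi d) delta D' -> D' = D)).
Proof.
move=> HG HN Hnorm Hc He d Hps dunit.
case: d Hps dunit => [|d'] Hps dunit; first by case: Hps.
split.
- move=> delta Hdel; exists (Dx Bi d' delta); split.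
    split; [exact: (Dx_der HG HN Hnorm Hps dunit Hdel) | exact: (Dx_ext HG HN Hnorm Hps dunit Hdel)].
  by move=> D' hD' hext; apply: (Dx_uniq HG HN Hnorm Hps dunit Hdel hD' hext).
- move=> delta Hdel HLN; exists (Dx Bi d' delta); split.
    split; first exact: (Dx_der HG HN Hnorm Hps dunit Hdel).
    split; first exact: (LN_all HG HN Hnorm Hc Hps dunit Hdel HLN).
    exact: (Dx_ext HG HN Hnorm Hps dunit Hdel).
  by move=> D' hD' _ hext; apply: (Dx_uniq HG HN Hnorm Hps dunit Hdel hD' hext).
Qed.
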